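(* Fix $\epsilon>0$ and define \[U_1:=\left\{(a,b)\in\bigl([0,1/2)\times[1/2,1)\bigr)\cup\bigl([1/2,1)\times[0,1/2)\bigr):\ a+b<\tfrac34\right\},\] \[U_2:=\left\{(a,b)\in[0,1/2)\times[0,1):\ \tfrac34+\epsilon<a+b<\tfrac54\right\},\] $U:=U_1\cup U_2$ and $S_\epsilon:=\pi(U)\subset\mathbb{T}^2$. Let $\theta_x,\theta_y,\theta_z\in S_\epsilon$ satisfy $2\theta_y=\theta_x+\theta_z$, and write $d:=\frac{\pi^{-1}(\theta_z)-\pi^{-1}(\theta_x)}{2}\in\mathbb{R}^2$. Then \[2\psi(\theta_y)\ge\psi(\theta_x)+\psi(\theta_z)+1/2\quad\text{or}\quad \psi(\theta_y)=\psi(\theta_x)+(d_1+d_2).\]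
   Context: $\mathbb{T}^2:=(\mathbb{R}/\mathbb{Z})^2$. $\pi:\mathbb{R}^2\to\mathbb{T}^2$, $x\mapsto x+\mathbb{Z}^2$, and for $\theta\in\mathbb{T}^2$, $\pi^{-1}(\theta)$ denotes the unique $x\in[0,1)^2$ with $\pi(x)=\theta$. The sum map $\psi:\mathbb{T}^2\to[0,2)$ is $\psi(\theta)=\pi^{-1}(\theta)_1+\pi^{-1}(\theta)_2$. *)

(* Defs.v *)
From Stdlib Require Import Reals ZArith.
Open Scope R_scope.

Definition R2 := (R * R)%type.

Definition is_int (r : R) : Prop := exists k : Z, r = IZR k.

(* The torus T^2 = (R/Z)^2 is represented by points of R^2 modulo Z^2:
   two points of R^2 denote the same element of T^2 iff their difference
   lies in Z^2.  pi : R^2 -> T^2 is the identity on representatives. *)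
Definition teq (a b : R2) : Prop :=
  is_int (fst a - fst b) /\ is_int (snd a - snd b).

Definition tadd (a b : R2) : R2 := (fst a + fst b, snd a + snd b).

(* pi^{-1}(theta): the unique representative in [0,1)^2 (fractional parts). *)
Definition pi_inv (t : R2) : R2 := (frac_part (fst t), frac_part (snd t)).

Definition psi (t : R2) : R := fst (pi_inv t) + snd (pi_inv t).

Definition U1 (p : R2) : Prop :=
  let a := fst p in let b := snd p in
  ((0 <= a < 1/2 /\ 1/2 <= b < 1) \/ (1/2 <= a < 1 /\ 0 <= b < 1/2))
  /\ a + b < 3/4.

Definition U2 (eps : R) (p : R2) : Prop :=
  let a := fst p in let b := snd p in
  (0 <= a < 1/2 /\ 0 <= b < 1) /\ 3/4 + eps < a + b < 5/4.

Definition U (eps : R) (p : R2) : Prop := U1 p \/ U2 eps p.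

Definition in_S (eps : R) (t : R2) : Prop := exists u : R2, U eps u /\ teq u t.

(* Main.v *)
Require Import Defs.
From Stdlib Require Import Reals Lra Lia ZArith.
Open Scope R_scope.

Lemma frac_eq (t u : R) (n : Z) : 0 <= u < 1 -> t - u = IZR n -> frac_part t = u.
Proof.
  intros Hu Ht. unfold frac_part.
  destruct (base_Int_part t) as [H1 H2].
  set (m := Int_part t) in *.
  assert (A : IZR (m - n) < 1) by (rewrite minus_IZR; lra).
  assert (B : -1 < IZR (m - n)) by (rewrite minus_IZR; lra).
  apply lt_IZR in A. assert (B' : (-1 < m - n)%Z) by (apply lt_IZR; lra).
  assert (m = n)%Z by lia. subst m. rewrite H. lra.
Qed.

Lemma U_box eps u : U eps u -> 0 <= fst u < 1 /\ 0 <= snd u < 1.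
Proof. unfold U, U1, U2; simpl; intros; lra. Qed.

Lemma rep eps t : in_S eps t ->
  U eps (pi_inv t) /\ (exists k, fst t - fst (pi_inv t) = IZR k)
  /\ (exists k, snd t - snd (pi_inv t) = IZR k).
Proof.
  intros [u [HU [[k1 E1] [k2 E2]]]].
  destruct (U_box _ _ HU) as [B1 B2].
  assert (F1 : frac_part (fst t) = fst u).
  { apply (frac_eq _ _ (- k1)); auto. rewrite opp_IZR. lra. }
  assert (F2 : frac_part (snd t) = snd u).
  { apply (frac_eq _ _ (- k2)); auto. rewrite opp_IZR. lra. }
  unfold pi_inv. rewrite F1, F2. destruct u as [u1 u2]. simpl in *.
  split; [exact HU|]. split; [exists (- k1)%Z | exists (- k2)%Z]; rewrite opp_IZR; lra.
Qed.

Lemma kcase (k : Z) : -2 < IZR k -> IZR k < 2 -> (k = -1 \/ k = 0 \/ k = 1)%Z.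
Proof.
  intros A B. assert (A' : (-2 < k)%Z) by (apply lt_IZR; lra).
  assert (B' : (k < 2)%Z) by (apply lt_IZR; lra). lia.
Qed.

Theorem proposition4p6 (eps : R) (tx ty tz : R2) :
  0 < eps ->
  in_S eps tx -> in_S eps ty -> in_S eps tz ->
  teq (tadd ty ty) (tadd tx tz) ->
  let d1 := (fst (pi_inv tz) - fst (pi_inv tx)) / 2 in
  let d2 := (snd (pi_inv tz) - snd (pi_inv tx)) / 2 in
  2 * psi ty >= psi tx + psi tz + 1/2 \/ psi ty = psi tx + (d1 + d2).
Proof.
  intros He Sx Sy Sz [[m1 M1] [m2 M2]] d1 d2.
  destruct (rep _ _ Sx) as [Ux [[a1 A1] [a2 A2]]].
  destruct (rep _ _ Sy) as [Uy [[b1 B1] [b2 B2]]].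
  destruct (rep _ _ Sz) as [Uz [[c1 C1] [c2 C2]]].
  unfold d1, d2, psi. clear d1 d2.
  destruct (pi_inv tx) as [x1 x2]; destruct (pi_inv ty) as [y1 y2];
  destruct (pi_inv tz) as [z1 z2]; simpl in *.
  destruct tx as [tx1 tx2]; destruct ty as [ty1 ty2]; destruct tz as [tz1 tz2];
  simpl in *.
  assert (K1 : 2 * y1 - x1 - z1 = IZR (m1 - 2 * b1 + a1 + c1)).
  { rewrite !plus_IZR, !minus_IZR, mult_IZR. simpl. lra. }
  assert (K2 : 2 * y2 - x2 - z2 = IZR (m2 - 2 * b2 + a2 + c2)).
  { rewrite !plus_IZR, !minus_IZR, mult_IZR. simpl. lra. }
  set (k1 := (m1 - 2 * b1 + a1 + c1)%Z) in *.
  set (k2 := (m2 - 2 * b2 + a2 + c2)%Z) in *.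
  unfold U, U1, U2 in Ux, Uy, Uz; simpl in Ux, Uy, Uz.
  assert (H1 : k1 = (-1)%Z \/ k1 = 0%Z \/ k1 = 1%Z) by (apply kcase; lra).
  assert (H2 : k2 = (-1)%Z \/ k2 = 0%Z \/ k2 = 1%Z) by (apply kcase; lra).
  clearbody k1 k2.
  destruct H1 as [H1|[H1|H1]]; destruct H2 as [H2|[H2|H2]]; subst k1 k2; simpl in K1, K2;
  destruct Ux as [[[Ux|Ux] Ux']|Ux]; destruct Uy as [[[Uy|Uy] Uy']|Uy];
  destruct Uz as [[[Uz|Uz] Uz']|Uz];
  first [left; lra | right; lra | exfalso; lra].
Qed.
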